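(* Let $n\ge1$, $N=\{1,\dots,n\}$, $A=[0,1]$. Any OWA mechanism that satisfies proportionality (P) also satisfies proportional fairness (PF), and therefore unanimous fair share (UFS).
   Context: A mechanism is a map $f:A^n\to A$ from profiles $x=(x_i)_{i\in N}$ of reported locations to a facility location. An OWA mechanism has weights $w_1,\dots,w_n\in[0,1]$ with $\sum_j w_j=1$ and returns $f(x)=\sum_{j=1}^n w_j x_{\pi(j)}$, where $\pi$ is a permutation of $N$ with $x_{\pi(1)}\le\dots\le x_{\pi(n)}$. P: for every $x\in\{0,1\}^n$, $f(x)=\#\{i\in N: x_i=1\}/n$. PF: for every $x\in A^n$, every nonempty $S\subseteq N$ and every $i\in S$, $|x_i-f(x)|\le 1-\frac{|S|}{n}+r_S$ where $r_S=\max_{j\in S}x_j-\min_{j\in S}x_j$. UFS: for every $x\in A^n$, every nonempty $S\subseteq N$ such that all $x_j$, $j\in S$, are equal, and every $i\in S$, $|x_i-f(x)|\le 1-\frac{|S|}{n}$. *)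

(* Defs.v *)
From HB Require Import structures.
From mathcomp Require Import all_boot all_order all_algebra.
From mathcomp Require Import reals.
Set Implicit Arguments. Unset Strict Implicit. Unset Printing Implicit Defensive.
Import Order.TTheory GRing.Theory Num.Theory.
Local Open Scope ring_scope.

Section Defs.
Variables (R : realType) (n : nat).

Definition inA (a : R) : Prop := 0 <= a <= 1.

(* OWA mechanism with weights w: f(x) = sum_j w_j * x_(pi(j)), where
   x_(pi(1)) <= ... <= x_(pi(n)) is the nondecreasing rearrangement of x. *)
Definition sorted_profile (x : 'I_n -> R) : seq R :=
  sort <=%R [seq x i | i <- enum 'I_n].

Definition owa (w : 'I_n -> R) (x : 'I_n -> R) : R :=
  \sum_(j < n) w j * nth 0 (sorted_profile x) j.

(* r_S = max_{j in S} x_j - min_{j in S} x_j; i is any element of S,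
   used as the (neutral) seed of the iterated max/min. *)
Definition range_S (x : 'I_n -> R) (S : {set 'I_n}) (i : 'I_n) : R :=
  (\big[Num.max/x i]_(j in S) x j) - (\big[Num.min/x i]_(j in S) x j).

Definition Prop_P (f : ('I_n -> R) -> R) : Prop :=
  forall x : 'I_n -> R, (forall i, x i = 0 \/ x i = 1) ->
    f x = #|[set i | x i == 1]|%:R / n%:R.

Definition Prop_PF (f : ('I_n -> R) -> R) : Prop :=
  forall x : 'I_n -> R, (forall i, inA (x i)) ->
  forall S : {set 'I_n}, S != set0 ->
  forall i, i \in S ->
    `|x i - f x| <= 1 - #|S|%:R / n%:R + range_S x S i.

Definition Prop_UFS (f : ('I_n -> R) -> R) : Prop :=
  forall x : 'I_n -> R, (forall i, inA (x i)) ->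
  forall S : {set 'I_n}, S != set0 ->
  (forall j k, j \in S -> k \in S -> x j = x k) ->
  forall i, i \in S ->
    `|x i - f x| <= 1 - #|S|%:R / n%:R.

End Defs.

(* Main.v *)
Require Import Defs.
From HB Require Import structures.
From mathcomp Require Import all_boot all_order all_algebra.
From mathcomp Require Import reals.
From mathcomp Require Import zify ring lra.
Import Order.TTheory GRing.Theory Num.Theory.
Local Open Scope ring_scope.

Section S.
Variable R : realType.

Lemma path_nseq (a : R) b : path <=%R a (nseq b a).
Proof. by elim: b => //= b ->; rewrite lexx. Qed.

Lemma sorted01 a b : sorted <=%R (nseq a (0:R) ++ nseq b 1).
Proof.
case: a => [|a] /=.
  by case: b => //= b; apply: path_nseq.
rewrite cat_path path_nseq /=.
have -> : last 0 (nseq a (0:R)) = 0 by elim: a.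
by case: b => //= b; rewrite ler01 path_nseq.
Qed.

Lemma perm01 (s : seq R) : all (fun y => (y == 0) || (y == 1)) s ->
  perm_eq s (nseq (size s - count (pred1 1) s) 0 ++ nseq (count (pred1 1) s) 1).
Proof.
elim: s => //= y s IH /andP [hy hs].
have hc := count_size (pred1 1) s.
case/orP: hy => /eqP ->.
  rewrite eq_sym oner_eq0 add0n subSn //=.
  by rewrite perm_cons IH.
rewrite eqxx add1n subSS /=.
rewrite perm_sym -[_ ++ _ :: _]/(_ ++ [:: 1] ++ _) perm_catCA /= perm_cons perm_sym.
exact: IH.
Qed.

Lemma count_card n (P : pred 'I_n) : count P (enum 'I_n) = #|[set i | P i]|.
Proof. by rewrite cardsE cardE /enum_mem size_filter (@eq_filter _ _ predT) ?filter_predT. Qed.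
Variable n : nat.
Implicit Types (x : 'I_n -> R) (w : 'I_n -> R).

Lemma sorted_eq01 x : (forall i, x i = 0 \/ x i = 1) ->
  sorted_profile x = nseq (n - #|[set i | x i == 1]|) 0 ++ nseq #|[set i | x i == 1]| 1.
Proof.
move=> hx.
have hall : all (fun y => (y == 0) || (y == 1)) [seq x i | i <- enum 'I_n].
  by apply/allP => y /mapP [i _ ->]; case: (hx i) => ->; rewrite eqxx ?orbT.
have hp := perm01 _ hall.
rewrite size_map size_enum_ord count_map count_card in hp.
rewrite /sorted_profile -(sorted_sort le_trans (sorted01 _ _)).
by apply/(perm_sortP le_total le_trans le_anti).
Qed.

Lemma owa01 w x : (forall i, x i = 0 \/ x i = 1) ->
  owa w x = \sum_(j < n | (n - #|[set i | x i == 1%R]| <= j)%N) w j.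
Proof.
move=> hx; rewrite /owa sorted_eq01 // [RHS]big_mkcond /=; apply: eq_bigr => j _.
set c := #|_|.
have hcn : (c <= n)%N by rewrite -[n in (_ <= n)%N]card_ord max_card.
have hj := ltn_ord j.
rewrite nth_cat size_nseq nth_nseq.
case: (ltnP j (n - c)) => h; first by rewrite mulr0.
rewrite nth_nseq ifT ?mulr1 //; lia.
Qed.

Lemma card_lt k : (k <= n)%N ->
  #|[set i : 'I_n | (if (i < k)%N then (1:R) else 0) == 1]| = k.
Proof.
move=> hk; rewrite -count_card.
rewrite (eq_count (a2 := fun i : 'I_n => (i < k)%N)); last first.
  by move=> i /=; case: ifP => _; rewrite ?eqxx // eq_sym oner_eq0.
rewrite -(count_map val (fun i => (i < k)%N)) val_enum_ord.
rewrite -(subnKC hk) iotaD count_cat add0n.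
rewrite (eq_in_count (a2 := predT)); last by move=> i; rewrite mem_iota.
rewrite count_predT size_iota.
rewrite (eq_in_count (a2 := pred0)); last first.
  by move=> i; rewrite mem_iota /= => /andP [h _]; rewrite ltnNge h.
by rewrite count_pred0 addn0.
Qed.

Lemma weights_eq w : (1 <= n)%N -> Prop_P (owa w) -> forall j, w j = 1 / n%:R.
Proof.
move=> hn hP.
have T k : (k <= n)%N -> \sum_(j < n | (n - k <= j)%N) w j = k%:R / n%:R.
  move=> hk.
  pose x := fun i : 'I_n => if (i < k)%N then (1:R) else 0.
  have hx : forall i, x i = 0 \/ x i = 1 by move=> i; rewrite /x; case: ifP; auto.
  have := hP x hx; rewrite (owa01 w x hx) /x card_lt //.
move=> j; have hj := ltn_ord j.
have e1 := T (n - j)%N (leq_subr _ _).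
have e2 := T (n - j.+1)%N (leq_subr _ _).
rewrite subKn ?(ltnW hj) // in e1.
rewrite subKn // in e2.
rewrite (bigD1 j) //= in e1.
rewrite (eq_bigl (fun j' : 'I_n => (j < j')%N)) in e1; last first.
  by move=> j'; rewrite ltn_neqAle andbC eq_sym.
have : w j = (n - j)%:R / n%:R - (n - j.+1)%:R / n%:R by rewrite -e1 -e2 addrK.
rewrite -(subnSK hj) mulrSr => ->.
by rewrite -mulrBl addrAC subrr add0r.
Qed.

Lemma owa_mean w x : (1 <= n)%N -> (forall j, w j = 1 / n%:R) ->
  owa w x = (\sum_i x i) / n%:R.
Proof.
move=> hn hw; rewrite /owa.
under eq_bigr => j _ do rewrite hw mul1r.
rewrite -mulr_sumr mulrC; congr (_ * _).
have hs : size (sorted_profile x) = n by rewrite /sorted_profile size_sort size_map size_enum_ord.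
have -> : \sum_(j < n) nth 0 (sorted_profile x) j = \sum_(y <- sorted_profile x) y.
  by rewrite (big_nth 0) hs big_mkord.
rewrite /sorted_profile (perm_big _ (permEl (perm_sort _ _))) big_map.
by rewrite big_enum.
Qed.

Lemma mean_PF x (S : {set 'I_n}) i : (1 <= n)%N -> (forall j, inA (x j)) -> i \in S ->
  `|x i - (\sum_j x j) / n%:R| <= 1 - #|S|%:R / n%:R + range_S x S i.
Proof.
move=> hn hA iS.
set m : R := n%:R.
have m0 : 0 < m by rewrite ltr0n.
set M := \big[Num.max/x i]_(j in S) x j.
set mi := \big[Num.min/x i]_(j in S) x j.
have hM j : j \in S -> x j <= M by move=> jS; rewrite /M (bigD1 j) //= le_max lexx.
have hm j : j \in S -> mi <= x j by move=> jS; rewrite /mi (bigD1 j) //= ge_min lexx.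
rewrite /range_S -/M -/mi.
set r := M - mi.
have r0 : 0 <= r by have := hM i iS; have := hm i iS; rewrite /r; lra.
have key : x i - (\sum_j x j) / m = (\sum_j (x i - x j)) / m.
  rewrite sumrB sumr_const card_ord -mulr_natr; field.
  by rewrite lt0r_neq0.
rewrite key normrM normfV (gtr0_norm m0) ler_pdivrMr //.
have -> : (1 - #|S|%:R / m + r) * m = (r + 1) * m - #|S|%:R.
  by field; rewrite lt0r_neq0.
apply: (le_trans (ler_norm_sum _ _ _)).
apply: (@le_trans _ _ (\sum_j (r + 1 - (if j \in S then 1 else 0)))).
  apply: ler_sum => j _.
  have := hA i; have := hA j; rewrite /inA => /andP [hj0 hj1] /andP [hi0 hi1].
  case: ifP => jS; rewrite ler_norml; apply/andP.
    have := hM i iS; have := hm i iS; have := hM j jS; have := hm j jS; rewrite /r.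
    by split; lra.
  by split; lra.
rewrite sumrB -big_mkcond /= !sumr_const card_ord /m.
rewrite -mulr_natr; rewrite le_eqVlt; apply/orP; left; apply/eqP; ring.
Qed.

End S.

Theorem corollary2 (R : realType) (n : nat) (hn : (1 <= n)%N)
    (w : 'I_n -> R) (hw : forall j, 0 <= w j <= 1)
    (hsum : \sum_(j < n) w j = 1) :
  Prop_P (owa w) -> Prop_PF (owa w) /\ Prop_UFS (owa w).
Proof.
move=> hP.
have hw' := @weights_eq R n w hn hP.
have PF : Prop_PF (owa w).
  move=> x hA S _ i iS.
  by rewrite (@owa_mean R n w x hn hw'); apply: mean_PF.
split => // x hA S hS heq i iS.
have := PF x hA S hS i iS.
suff -> : range_S x S i = 0 by rewrite addr0.
rewrite /range_S.
have -> : \big[Num.max/x i]_(j in S) x j = x i.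
  by apply: (big_ind (fun y => y = x i)) => // [a b -> ->|j jS]; [exact: maxxx | exact: heq].
have -> : \big[Num.min/x i]_(j in S) x j = x i.
  by apply: (big_ind (fun y => y = x i)) => // [a b -> ->|j jS]; [exact: minxx | exact: heq].
by rewrite subrr.
Qed.
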